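(* Let $T$ be a reflection factorization in $G(4,2,2)$ of length $\ell\ge 4$ containing at least one entry from each of the conjugacy classes $S_1,S_2,S_3$. Let $r$ be a reflection in one of these conjugacy classes that is represented by more than one entry of $T$. If $x$ is a reflection in the same conjugacy class as $r$, then the Hurwitz orbit of $T$ contains a factorization whose right-most entry is $x$ and whose first $\ell-1$ entries generate $G(4,2,2)$.
   Context: $G(4,2,2)$ is the group of the sixteen $2\times 2$ complex monomial matrices whose nonzero entries lie in $\{\pm1,\pm i\}$ and whose two nonzero entries multiply to $\pm 1$. A reflection is a matrix whose fixed space in $\mathbb{C}^2$ has dimension $1$. $G(4,2,2)$ contains six reflections, all of order $2$, which split into three conjugacy classes $S_1,S_2,S_3$ of $G(4,2,2)$, each of size $2$. A reflection factorization of length $\ell$ is a tuple $(r_1,\dots,r_\ell)$ of reflections in $G(4,2,2)$; a set of entries generates the subgroup they generate. The Hurwitz move $\sigma_i$ sends $(r_1,\dots,r_\ell)$ to $(r_1,\dots,r_{i-1},r_{i+1},r_{i+1}^{-1}r_ir_{i+1},r_{i+2},\dots,r_\ell)$; the Hurwitz orbit of $T$ is the set of factorizations obtained from $T$ by finite sequences of Hurwitz moves. *)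

(* Defs.v *)
From HB Require Import structures.
From mathcomp Require Import all_boot all_order all_algebra all_field.
Set Implicit Arguments. Unset Strict Implicit. Unset Printing Implicit Defensive.
Import Order.TTheory GRing.Theory Num.Theory.
Local Open Scope ring_scope.

Notation mat := 'M[algC]_2.
Definition i0 : 'I_2 := ord0.
Definition i1 : 'I_2 := ord_max.

Definition unit4 (z : algC) : bool := z \in [:: 1; -1; 'i; - 'i].

Definition pm1 (z : algC) : bool := (z == 1) || (z == -1).

Definition inG422 (A : mat) : bool :=
  [&& A i0 i1 == 0, A i1 i0 == 0, unit4 (A i0 i0), unit4 (A i1 i1)
    & pm1 (A i0 i0 * A i1 i1)]
  || [&& A i0 i0 == 0, A i1 i1 == 0, unit4 (A i0 i1), unit4 (A i1 i0)
    & pm1 (A i0 i1 * A i1 i0)].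

(* dimension of the fixed space {v in C^2 | A v = v} (column vectors),
   computed as the row kernel of (A - 1)^T *)
Definition fixdim (A : mat) : nat := \rank (kermx ((A - 1%:M)^T)).

Definition reflection (A : mat) : Prop := inG422 A /\ fixdim A = 1%N.

Definition conjG (A B : mat) : Prop :=
  exists2 g, inG422 g & B = invmx g *m A *m g.

Inductive gen (S : mat -> Prop) : mat -> Prop :=
| gen_base A : S A -> gen S A
| gen_one : gen S 1%:M
| gen_mul A B : gen S A -> gen S B -> gen S (A *m B)
| gen_inv A : gen S A -> gen S (invmx A).

Definition generates_G422 (s : seq mat) : Prop :=
  forall A, gen (fun B => B \in s) A <-> inG422 A.

(* Hurwitz move sigma_(i+1) (0-based index i, requires i.+1 < size s) *)
Definition hurwitz_move (i : nat) (s : seq mat) : seq mat :=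
  let ri := nth 0 s i in let rj := nth 0 s i.+1 in
  take i s ++ [:: rj; invmx rj *m ri *m rj] ++ drop i.+2 s.

Inductive hurwitz_step (s t : seq mat) : Prop :=
| HStep i : (i.+1 < size s)%N -> t = hurwitz_move i s -> hurwitz_step s t.

Inductive in_hurwitz_orbit (s : seq mat) : seq mat -> Prop :=
| HO_refl : in_hurwitz_orbit s s
| HO_step t u : in_hurwitz_orbit s t -> hurwitz_step t u -> in_hurwitz_orbit s u.

(* Main.v *)
Require Import Defs.
From HB Require Import structures.
From mathcomp Require Import all_boot all_order all_algebra all_field.
From mathcomp Require Import zify.
Import Order.TTheory GRing.Theory Num.Theory.
Local Open Scope ring_scope.

Module Helpers.
Set Implicit Arguments. Unset Strict Implicit. Unset Printing Implicit Defensive.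

Lemma ord2P (i : 'I_2) : i = i0 \/ i = i1.
Proof. case: i => [[|[|k]] Hi]; [left|right|by []]; exact: val_inj. Qed.

Lemma det2 (A : 'M[algC]_2) : \det A = A i0 i0 * A i1 i1 - A i0 i1 * A i1 i0.
Proof.
rewrite (expand_det_row _ ord0) !big_ord_recl big_ord0 /cofactor !det_mx11 !mxE /=.
rewrite addr0 expr0 mul1r expr1 mulN1r mulrN.
have E0 : forall k : 'I_1, lift (lift ord0 ord0) k = i0 by move=> k; apply: val_inj; case: k => [[|]].
have E1 : forall k : 'I_1, lift ord0 k = i1 by move=> k; apply: val_inj; case: k => [[|]].
by rewrite !E0 !E1.
Qed.

Lemma mulmx2 (A B : 'M[algC]_2) i j : (A *m B) i j = A i i0 * B i0 j + A i i1 * B i1 j.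
Proof. rewrite !mxE !big_ord_recl big_ord0 addr0 /=.
have E1 : forall k : 'I_1, lift ord0 k = i1 by move=> k; apply: val_inj; case: k => [[|]].
by rewrite !E1. Qed.

Lemma iX4 : 'i ^+ 4 = 1 :> algC.
Proof. by rewrite (_ : 4 = 2 * 2)%N // exprM sqrCi sqrrN expr1n. Qed.

Lemma iXmod n : 'i ^+ n = 'i ^+ (n %% 4) :> algC.
Proof. by rewrite {1}(divn_eq n 4) exprD mulnC exprM iX4 expr1n mul1r. Qed.

Definition K := (bool * 'I_4 * 'I_4)%type.

Lemma iXD (a b : 'I_4) : 'i ^+ (a + b)%R = 'i ^+ a * 'i ^+ b :> algC.
Proof. by rewrite -exprD [in RHS]iXmod. Qed.

Definition m (c : K) : mat := let: (p, a, b) := c in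
  \matrix_(i, j) if p then (if i == j then 0 else if i == i0 then 'i ^+ a else 'i ^+ b)
                 else (if i == j then (if i == i0 then 'i ^+ a else 'i ^+ b) else 0).

Definition mulK (c d : K) : K :=
  let: (p, a0, a1) := c in let: (q, b0, b1) := d in
  (p (+) q, (a0 + (if p then b1 else b0))%R, (a1 + (if p then b0 else b1))%R).

Definition invK (c : K) : K := let: (p, a0, a1) := c in
  if p then (true, (- a1)%R, (- a0)%R) else (false, (- a0)%R, (- a1)%R).

Definition idK : K := (false, 0%R, 0%R).

Lemma m_mul c d : m (mulK c d) = m c *m m d.
Proof.
case: c => [[p a0] a1]; case: d => [[q b0] b1].
apply/matrixP => i j; rewrite mulmx2 !mxE.
by case: p; case: q; case: (ord2P i) => ->; case: (ord2P j) => -> /=;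
  rewrite ?mul0r ?mulr0 ?add0r ?addr0 ?iXD.
Qed.

Lemma m_id : m idK = 1%:M.
Proof.
apply/matrixP => i j; rewrite !mxE.
by case: (ord2P i) => ->; case: (ord2P j) => -> /=.
Qed.

Definition ords : seq 'I_4 := [:: @Ordinal 4 0 erefl; @Ordinal 4 1 erefl; @Ordinal 4 2 erefl; @Ordinal 4 3 erefl].
Definition allK : seq K := [seq (pa.1, pa.2, b) | pa <- [seq (p, a) | p <- [:: false; true], a <- ords], b <- ords].

Lemma mem_allK c : c \in allK.
Proof. by case: c => [[p [[|[|[|[|a]]]] Ha]] [[|[|[|[|b]]]] Hb]]; case: p. Qed.

Lemma allKP (P : pred K) : all P allK -> forall c, P c.
Proof. by move/allP => H c; apply: H; apply: mem_allK. Qed.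

Lemma mulKV_id : forall c, mulK c (invK c) = idK.
Proof. move=> c; apply/eqP; move: c; apply: allKP; by vm_compute. Qed.

Lemma m_inv c : invmx (m c) = m (invK c).
Proof.
have H : m c *m m (invK c) = 1%:M by rewrite -m_mul mulKV_id m_id.
have [U _] := mulmx1_unit H.
by rewrite -[LHS]mulmx1 -H mulKmx.
Qed.

Lemma nN11 : (-1 : algC) != 1.
Proof. by rewrite -subr_eq0 -opprD oppr_eq0 (_ : 1 + 1 = 2%:R) // pnatr_eq0. Qed.
Lemma ni1 : ('i : algC) != 1.
Proof. by apply/eqP => H; move: (@sqrCi algC); rewrite H expr1n => /esym/eqP; rewrite (negbTE nN11). Qed.
Lemma niN1 : ('i : algC) != -1.
Proof. by apply/eqP => H; move: (@sqrCi algC); rewrite H sqrrN expr1n => /esym/eqP; rewrite (negbTE nN11). Qed.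
Lemma niNi : ('i : algC) != - 'i.
Proof.
apply/eqP => H.
have : ('i : algC) *+ 2 == 0 by rewrite mulr2n {1}H addNr.
by rewrite mulrn_eq0 /= (negbTE (@neq0Ci algC)).
Qed.
Lemma nNi1 : (- 'i : algC) != 1.
Proof. by rewrite eqr_oppLR niN1. Qed.
Lemma nNiN1 : (- 'i : algC) != -1.
Proof. by rewrite eqr_opp ni1. Qed.

Lemma iX_vals (a : 'I_4) : 'i ^+ a = nth 0 [:: 1; 'i; -1; -'i] a :> algC.
Proof.
case: a => [[|[|[|[|a]]]] Ha] //=; rewrite ?expr0 ?expr1 ?sqrCi //.
by rewrite exprS sqrCi mulrN1.
Qed.

Lemma iX_inj (a b : 'I_4) : ('i ^+ a == 'i ^+ b :> algC) = (a == b).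
Proof.
rewrite !iX_vals.
case: a => [[|[|[|[|a]]]] Ha] //; case: b => [[|[|[|[|b]]]] Hb] //=;
  rewrite ?eqxx // ?(negbTE nN11) ?(negbTE ni1) ?(negbTE niN1) ?(negbTE niNi)
    ?(negbTE nNi1) ?(negbTE nNiN1) //;
  rewrite eq_sym ?(negbTE nN11) ?(negbTE ni1) ?(negbTE niN1) ?(negbTE niNi)
    ?(negbTE nNi1) ?(negbTE nNiN1) //.
Qed.

Lemma iX_neq0 n : ('i ^+ n : algC) != 0.
Proof. by rewrite expf_neq0 // (@neq0Ci algC). Qed.

Lemma m_inj : injective m.
Proof.
move=> [[p a0] a1] [[q b0] b1] /matrixP H.
have H00 := H i0 i0; have H11 := H i1 i1; have H01 := H i0 i1; have H10 := H i1 i0.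
rewrite !mxE /= in H00 H11 H01 H10; clear H.
case: p q H00 H11 H01 H10 => [] [] /= H00 H11 H01 H10.
- move/eqP: H01; rewrite iX_inj => /eqP ->; move/eqP: H10; rewrite iX_inj => /eqP -> //.
- by move: (iX_neq0 a0); rewrite H01 eqxx.
- by move: (iX_neq0 b0); rewrite H01 eqxx.
- move/eqP: H00; rewrite iX_inj => /eqP ->; move/eqP: H11; rewrite iX_inj => /eqP -> //.
Qed.


Definition valid (c : K) : bool := let: (p, a, b) := c in ~~ odd (a + b)%N.

Lemma unit4P z : unit4 z -> exists a : 'I_4, z = 'i ^+ a.
Proof.
rewrite /unit4 !inE => /or4P [] /eqP ->.
- by exists (@Ordinal 4 0 erefl); rewrite expr0.
- by exists (@Ordinal 4 2 erefl); rewrite /= sqrCi.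
- by exists (@Ordinal 4 1 erefl); rewrite expr1.
- by exists (@Ordinal 4 3 erefl); rewrite /= exprS sqrCi mulrN1.
Qed.

Lemma unit4X (a : 'I_4) : unit4 ('i ^+ a).
Proof. by rewrite iX_vals /unit4 !inE; case: a => [[|[|[|[|a]]]] Ha] //=; rewrite eqxx ?orbT. Qed.

Lemma pm1X (a b : 'I_4) : pm1 ('i ^+ a * 'i ^+ b) = ~~ odd (a + b)%N.
Proof.
rewrite -iXD iX_vals /pm1.
case: a => [[|[|[|[|a]]]] Ha] //; case: b => [[|[|[|[|b]]]] Hb] //=;
  rewrite ?eqxx ?orbT // ?(negbTE nN11) ?(negbTE ni1) ?(negbTE niN1) 
    ?(negbTE nNi1) ?(negbTE nNiN1) //.
Qed.

Lemma inG_m A : inG422 A <-> exists c, valid c /\ A = m c.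
Proof.
split.
- case/orP => /and5P [/eqP H01 /eqP H10 /unit4P [a Ha] /unit4P [b Hb] P].
  + exists (false, a, b); split; first by rewrite /= -pm1X -Ha -Hb.
    apply/matrixP => i j; rewrite !mxE.
    by case: (ord2P i) => ->; case: (ord2P j) => -> /=.
  + exists (true, a, b); split; first by rewrite /= -pm1X -Ha -Hb.
    apply/matrixP => i j; rewrite !mxE.
    by case: (ord2P i) => ->; case: (ord2P j) => -> /=.
- case=> [[[p a] b] [V ->]]; rewrite /inG422 !mxE /=.
  by case: p V => /= V; rewrite eqxx !unit4X pm1X V ?orbT.
Qed.


Lemma rank1 (M : 'M[algC]_2) : (\rank M == 1%N) = (M != 0) && (\det M == 0).
Proof.
have U : (\rank M == 2%N) = (\det M != 0) by rewrite -unitfE -unitmxE -row_free_unit.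
rewrite -mxrank_eq0.
have := rank_leq_row M.
case: (\rank M) U => [|[|[|k]]] //= U _; by rewrite -[\det M == 0]negbK -U.
Qed.

Lemma fixdim1 A : (fixdim A == 1%N) = (A - 1%:M != 0) && (\det (A - 1%:M) == 0).
Proof.
rewrite /fixdim mxrank_ker mxrank_tr -rank1.
have := rank_leq_row (A - 1%:M).
by case: (\rank (A - 1%:M)) => [|[|[|k]]].
Qed.

Definition detz (c : K) : bool := let: (p, a, b) := c in
  if p then (a + b)%R == 0%R else (a == 0%R) || (b == 0%R).

Definition reflK (c : K) : bool := [&& valid c, c != idK & detz c].

Lemma iX_eq1 (a : 'I_4) : ('i ^+ a == 1 :> algC) = (a == 0%R).
Proof. by rewrite -(expr0 'i) (iX_inj a 0%R). Qed.

Lemma det_m1 c : (\det (m c - 1%:M) == 0) = detz c.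
Proof.
case: c => [[p a] b]; rewrite det2 !mxE /=.
case: p => /=.
- rewrite !subr0 !sub0r mulrNN mulr1 subr_eq0 eq_sym -iXD iX_eq1 //.
- rewrite !subr0 mul0r subr0 mulf_eq0 !subr_eq0 !iX_eq1 //.
Qed.

Lemma m_neq1 c : (m c - 1%:M != 0) = (c != idK).
Proof. by rewrite subr_eq0 -m_id (inj_eq m_inj). Qed.

Lemma refl_m c : reflection (m c) <-> reflK c.
Proof.
split.
- case=> /inG_m [c' [V E]] /eqP; rewrite fixdim1 m_neq1 det_m1 => H.
  have ? := m_inj E; subst c'; by rewrite /reflK V.
- case/and3P => V N D; split; first by apply/inG_m; exists c.
  by apply/eqP; rewrite fixdim1 m_neq1 det_m1 N D.
Qed.

Lemma refl_code A : reflection A -> exists c, reflK c /\ A = m c.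
Proof.
move=> R; have [/inG_m [c [_ E]] _] := R.
by exists c; split => //; apply/refl_m; rewrite -E.
Qed.


Definition conjc (b a : K) : K := mulK (mulK (invK b) a) b.

Lemma m_conj b a : invmx (m b) *m m a *m m b = m (conjc b a).
Proof. by rewrite /conjc !m_mul m_inv. Qed.

Definition cls (c : K) : nat := let: (p, a, _) := c in if p then (if odd a then 2 else 1) else 0.

Lemma FF1 g a : valid g -> reflK a -> reflK (conjc g a) && (cls (conjc g a) == cls a).
Proof.
move: g a; suff H : all (fun g => all (fun a => valid g ==> reflK a ==> (reflK (conjc g a) && (cls (conjc g a) == cls a))) allK) allK.
  by move=> g a; move: (allKP H g) => /allP /(_ a (mem_allK a)) /implyP X /X /implyP.
by vm_compute.
Qed.

Lemma FF2 a e x : reflK a -> reflK e -> reflK x -> cls e != cls a -> cls x == cls a -> x != a -> conjc e a = x.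
Proof.
move: a e x; suff H : all (fun a => all (fun e => all (fun x => reflK a ==> reflK e ==> reflK x ==> (cls e != cls a) ==> (cls x == cls a) ==> (x != a) ==> (conjc e a == x)) allK) allK) allK.
  move=> a e x; move: (allKP H a) => /allP /(_ e (mem_allK e)) /allP /(_ x (mem_allK x)).
  by do 6 (move/implyP=> X /X {X}); move/eqP.
by vm_compute.
Qed.

Lemma valid_mul g h : valid g -> valid h -> valid (mulK g h).
Proof.
move: g h; suff H : all (fun g => all (fun h => valid g ==> valid h ==> valid (mulK g h)) allK) allK.
  by move=> g h; move: (allKP H g) => /allP /(_ h (mem_allK h)) /implyP X /X /implyP.
by vm_compute.
Qed.

Lemma valid_inv g : valid g -> valid (invK g).
Proof.
move: g; suff H : all (fun g => valid g ==> valid (invK g)) allK by move=> g; move: (allKP H g) => /implyP.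
by vm_compute.
Qed.

Lemma conjG_cls a b : reflK a -> conjG (m a) (m b) -> cls b = cls a.
Proof.
move=> Ra [g /inG_m [g' [Vg ->]]]; rewrite m_conj => /m_inj ->.
by case/andP: (FF1 Vg Ra) => _ /eqP.
Qed.

Lemma reflK_valid a : reflK a -> valid a.
Proof. by case/and3P. Qed.

Lemma gen_inG (S : seq K) : all valid S -> forall A, gen (fun B => B \in map m S) A -> inG422 A.
Proof.
move=> VS A; elim => {A}.
- move=> A /mapP [c Hc ->]; apply/inG_m; exists c; split => //; exact: (allP VS).
- apply/inG_m; exists idK; split; [by [] | exact/esym/m_id].
- move=> A B _ /inG_m [a [Va ->]] _ /inG_m [b [Vb ->]].
  by apply/inG_m; exists (mulK a b); rewrite m_mul valid_mul.
- move=> A _ /inG_m [a [Va ->]].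
  by apply/inG_m; exists (invK a); rewrite m_inv valid_inv.
Qed.

Definition step (G S : seq K) : seq K := undup (S ++ [seq mulK x y | x <- S, y <- G]).

Lemma gen_iter X (S : seq K) n : (forall y, y \in S -> gen X (m y)) ->
  forall y, y \in iter n (step S) S -> gen X (m y).
Proof.
move=> H; elim: n => [|n IH] //= y; rewrite mem_undup mem_cat => /orP [/IH //|].
case/allpairsP => [[u v] [/= Hu Hv ->]]; rewrite m_mul; apply: gen_mul; [exact: IH | exact: H].
Qed.

Lemma closure_check : all (fun a => all (fun b => all (fun c =>
   if [&& reflK a, reflK b, reflK c, cls a == 0%N, cls b == 1%N & cls c == 2%N] then
   all (fun v => valid v ==> (v \in iter 6 (step [:: a; b; c]) [:: a; b; c])) allK else true) allK) allK) allK.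
Proof. by vm_compute. Qed.

Lemma closure_ok a b c v : reflK a -> reflK b -> reflK c -> cls a = 0%N -> cls b = 1%N -> cls c = 2%N ->
  valid v -> v \in iter 6 (step [:: a; b; c]) [:: a; b; c].
Proof.
move=> Ra Rb Rc Ca Cb Cc Vv.
have E : [&& reflK a, reflK b, reflK c, cls a == 0%N, cls b == 1%N & cls c == 2%N] = true.
  by rewrite Ra Rb Rc Ca Cb Cc.
have := allKP closure_check a => /allP /(_ b (mem_allK b)) /allP /(_ c (mem_allK c)).
rewrite E => /allP /(_ v (mem_allK v)) /implyP; exact.
Qed.

Lemma gen_all (S : seq K) : all reflK S -> (forall cl, (cl < 3)%N -> has (fun a => cls a == cl) S) ->
  generates_G422 (map m S).
Proof.
move=> RS HS A; split.
  apply: gen_inG; apply/allP => c Hc; apply: reflK_valid; exact: (allP RS).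
case/inG_m => v [Vv ->].
have [a Ha /eqP Ca] := hasP (HS 0%N isT).
have [b Hb /eqP Cb] := hasP (HS 1%N isT).
have [c Hc /eqP Cc] := hasP (HS 2%N isT).
move/allP: RS => RS.
have Hv := closure_ok (RS a Ha) (RS b Hb) (RS c Hc) Ca Cb Cc Vv.
apply: (gen_iter _ Hv) => y; rewrite !inE => /or3P [] /eqP ->; apply: gen_base; exact: map_f.
Qed.


Definition reach (s t : seq K) : Prop :=
  [/\ in_hurwitz_orbit (map m s) (map m t), all reflK t & perm_eq (map cls t) (map cls s)].

Definition hm (i : nat) (t : seq K) : seq K :=
  take i t ++ [:: nth idK t i.+1; conjc (nth idK t i.+1) (nth idK t i)] ++ drop i.+2 t.

Lemma map_hm i t : (i.+1 < size t)%N -> map m (hm i t) = hurwitz_move i (map m t).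
Proof.
move=> Hi; rewrite /hm /hurwitz_move !map_cat map_take map_drop /=.
rewrite !(nth_map idK 0) // ?(ltnW Hi) // m_conj //.
Qed.

Lemma split2 (t : seq K) i : (i.+1 < size t)%N ->
  t = take i t ++ [:: nth idK t i; nth idK t i.+1] ++ drop i.+2 t.
Proof.
move=> Hi; rewrite -{1}(cat_take_drop i t); congr (_ ++ _).
by rewrite (drop_nth idK (ltnW Hi)) (drop_nth idK Hi).
Qed.

Lemma reach_refl s : all reflK s -> reach s s.
Proof. by move=> R; split => //; exact: HO_refl. Qed.

Lemma reach_step s t i : reach s t -> (i.+1 < size t)%N -> reach s (hm i t).
Proof.
case=> O R P Hi.
have Ra : reflK (nth idK t i) by apply: (allP R); apply: mem_nth; exact: ltnW.
have Rb : reflK (nth idK t i.+1) by apply: (allP R); apply: mem_nth.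
have /andP [Rc /eqP Cc] := FF1 (reflK_valid Rb) Ra.
split.
- apply: HO_step O _; apply: (HStep (i := i)); first by rewrite size_map.
  by rewrite map_hm.
- rewrite /hm !all_cat /= Rb Rc /=; apply/andP; split; apply/allP => y Hy; apply: (allP R).
  + exact: mem_take Hy.
  + exact: mem_drop Hy.
- apply: perm_trans P; rewrite {2}(split2 Hi) /hm !map_cat perm_cat2l perm_cat2r /= Cc.
  by apply/permP => p /=; rewrite addnCA.
Qed.

Lemma hm_cons (u : seq K) c b w : hm (size u) (u ++ c :: b :: w) = u ++ b :: conjc b c :: w.
Proof.
rewrite /hm take_size_cat // !nth_cat ltnn ltnNge leqnSn /= subnn subSnn /=.
by rewrite -addn2 drop_cat ltnNge leq_addr /= (addnC (size u) 2%N) addnK /= drop0.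
Qed.

Lemma move_end s w : forall u c, reach s (u ++ c :: w) ->
  exists c', reach s (u ++ w ++ [:: c']) /\ cls c' = cls c.
Proof.
elim: w => [|b w IH] u c H; first by exists c.
have R : all reflK (u ++ c :: b :: w) by case: H.
have Rc : reflK c by apply: (allP R); rewrite mem_cat inE eqxx orbT.
have Rb : reflK b by apply: (allP R); rewrite mem_cat !inE eqxx !orbT.
have Hs : ((size u).+1 < size (u ++ c :: b :: w))%N by rewrite size_cat /= !addnS !ltnS leq_addr.
have H2 := reach_step H Hs.
rewrite hm_cons -cat_rcons in H2.
have [c' [H3 C3]] := IH _ _ H2.
exists c'; split; first by rewrite cat_rcons in H3.
rewrite C3; by case/andP: (FF1 (reflK_valid Rb) Rc) => _ /eqP.
Qed.


Lemma mem_split (x : K) s : x \in s -> exists u w, s = u ++ x :: w.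
Proof. by case/splitPr => u w; exists u, w. Qed.

Lemma size2 (p : seq K) a b : ((size p).+1 < size (p ++ [:: a; b]))%N.
Proof. by rewrite size_cat addn2. Qed.

Lemma main_codes s xc d : all reflK s -> reflK xc -> d \in s -> cls d != cls xc ->
  has (fun a => cls a == cls xc) s -> exists t, reach s t /\ last idK t = xc.
Proof.
move=> R Rx Hd Cd Hc.
case/mem_split: Hd => u [w E]; subst s.
have H0 := reach_refl R.
have [d' [H1 C1]] := move_end H0.
have Hc2 : has (fun a => cls a == cls xc) (u ++ w).
  by move: Hc; rewrite !has_cat /= (negbTE Cd).
case/hasP: Hc2 => c Hcm /eqP Cc.
case/mem_split: Hcm => u2 [w2 E2].
have H1' : reach (u ++ d :: w) (u2 ++ c :: (w2 ++ [:: d'])) by rewrite -cat_cons catA -E2 -catA.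
have [c' [H2 C2]] := move_end H1'.
have R2 : all reflK (u2 ++ (w2 ++ [:: d']) ++ [:: c']) by case: H2.
have Rd' : reflK d' by apply: (allP R2); rewrite !mem_cat !inE eqxx !orbT.
have Rc' : reflK c' by apply: (allP R2); rewrite !mem_cat !inE eqxx !orbT.
case: (eqVneq c' xc) => [Ec | Nc].
  by exists (u2 ++ (w2 ++ [:: d']) ++ [:: c']); split => //; rewrite !last_cat /= Ec.
set p := u2 ++ w2.
have E3 : u2 ++ (w2 ++ [:: d']) ++ [:: c'] = p ++ [:: d'; c'] by rewrite /p -!catA.
rewrite E3 in H2.
have H3 := reach_step H2 (size2 p d' c').
rewrite (hm_cons p d' c' [::]) in H3.
have H4 := reach_step H3 (size2 p c' (conjc c' d')).
rewrite (hm_cons p c' (conjc c' d') [::]) in H4.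
exists (p ++ [:: conjc c' d'; conjc (conjc c' d') c']); split => //.
rewrite last_cat /=.
have /andP [Re /eqP Ce] := FF1 (reflK_valid Rc') Rd'.
apply: FF2 => //.
- by rewrite Ce C1 C2 Cc.
- by rewrite C2 Cc.
- by rewrite eq_sym.
Qed.


Lemma codes_of (T : seq mat) : (forall A, A \in T -> reflection A) -> exists s, all reflK s /\ T = map m s.
Proof.
elim: T => [|A T IH] H; first by exists [::].
have [a [Ra ->]] := refl_code (H A (mem_head _ _)).
have H' : forall B, B \in T -> reflection B by move=> B HB; apply: H; rewrite inE HB orbT.
have [s [Rs ->]] := IH H'.
by exists (a :: s); rewrite /= Ra Rs.
Qed.

Lemma rep cl : (cl < 3)%N -> exists a, reflK a /\ cls a = cl.
Proof.
case: cl => [|[|[|cl]]] // _.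
- by exists (false, @Ordinal 4 0 erefl, @Ordinal 4 2 erefl); split; [vm_compute|].
- by exists (true, @Ordinal 4 0 erefl, @Ordinal 4 0 erefl); split; [vm_compute|].
- by exists (true, @Ordinal 4 1 erefl, @Ordinal 4 3 erefl); split; [vm_compute|].
Qed.

Lemma count_cls cl (q : seq K) : count (fun a => cls a == cl) q = count (pred1 cl) (map cls q).
Proof. by rewrite count_map. Qed.

Lemma count2 (s : seq K) i j cl : (i < j)%N -> (j < size s)%N -> cls (nth idK s i) = cl ->
  cls (nth idK s j) = cl -> (2 <= count (fun a => cls a == cl) s)%N.
Proof.
move=> Hij Hj Ci Cj.
rewrite -(cat_take_drop j s) count_cat (drop_nth idK Hj) /= Cj eqxx.
have : (0 < count (fun a => cls a == cl) (take j s))%N.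
  rewrite -has_count; apply/hasP; exists (nth idK s i); last by rewrite Ci.
  rewrite -(nth_take idK Hij); apply: mem_nth; rewrite size_take Hj; exact: Hij.
lia.
Qed.

End Helpers.
Import Helpers.

Theorem proposition3p9 (T : seq 'M[algC]_2) (r x : 'M[algC]_2) :
  (4 <= size T)%N ->
  (forall A, A \in T -> reflection A) ->
  (* T has an entry from each conjugacy class of reflections *)
  (forall s, reflection s -> exists2 A, A \in T & conjG A s) ->
  reflection r ->
  (* the conjugacy class of r is represented by more than one entry of T *)
  (exists i j : nat, [/\ (i < j)%N, (j < size T)%N,
      conjG (nth 0 T i) r & conjG (nth 0 T j) r]) ->
  reflection x -> conjG r x ->
  exists2 T', in_hurwitz_orbit T T' &
    last 0 T' = x /\ generates_G422 (take (size T).-1 T').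
Proof.
move=> Hsz HT Hcls Rr [i [j [Hij Hj Ci Cj]]] Rx Crx.
have [s [Rs ET]] := codes_of HT; subst T.
have [rc [Rrc Er]] := refl_code Rr; subst r.
have [xc [Rxc Ex]] := refl_code Rx; subst x.
rewrite size_map in Hsz Hj *.
have Hi : (i < size s)%N by apply: ltn_trans Hj.
have Rsi : forall k, (k < size s)%N -> reflK (nth idK s k).
  by move=> k Hk; apply: (allP Rs); apply: mem_nth.
rewrite (nth_map idK) // in Ci; rewrite (nth_map idK) // in Cj.
have Cx := conjG_cls Rrc Crx.
have Cci := conjG_cls (Rsi i Hi) Ci.
have Ccj := conjG_cls (Rsi j Hj) Cj.
have Hclass : forall cl, (cl < 3)%N -> has (fun a => cls a == cl) s.
  move=> cl Hcl; have [a [Ra Ca]] := rep Hcl.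
  have [A /mapP [a' Ha' ->] Hc] := Hcls (m a) (proj2 (refl_m a) Ra).
  apply/hasP; exists a' => //; rewrite -Ca; apply/eqP; apply: esym.
  exact: conjG_cls (allP Rs a' Ha') Hc.
set cl := if cls xc == 0%N then 1%N else 0%N.
have Hcl : (cl < 3)%N by rewrite /cl; case: (cls xc == 0%N).
have Ncl : cl != cls xc by rewrite /cl; case: (cls xc).
have [d Hd /eqP Cd] := hasP (Hclass cl Hcl).
have HC : has (fun a => cls a == cls xc) s.
  by apply/hasP; exists (nth idK s i); [apply: mem_nth | rewrite -Cci Cx].
have Ndx : cls d != cls xc by rewrite Cd.
have [t [[O Rt P] Lt]] := main_codes Rs Rxc Hd Ndx HC.
exists (map m t) => //.
have Sz := perm_size P; rewrite !size_map in Sz.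
move: O Rt P Lt Sz; case/lastP: t => [|p z] O Rt P Lt Sz.
  by rewrite -Sz in Hsz.
rewrite last_rcons in Lt; subst z.
rewrite map_rcons last_rcons; split => //.
rewrite -Sz size_rcons /= -cats1 take_size_cat ?size_map //.
move: Rt; rewrite -cats1 all_cat => /andP [Rp _].
apply: gen_all => // cl' Hcl'.
rewrite has_count count_cls.
have := (permP P) (pred1 cl'); rewrite -cats1 map_cat count_cat /= -count_cls addn0.
case: (eqVneq (cls xc) cl') => [E|N] /=.
- have := count2 Hij Hj (esym (etrans Cx Cci)) (esym (etrans Cx Ccj)).
  rewrite E -count_cls; lia.
- rewrite addn0 -count_cls => ->; rewrite -has_count; exact: Hclass.
Qed.
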